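(* Let $m\ge1$ and $a_1,\dots,a_{2m},b_1,\dots,b_{2m}\in\mathbb{C}$. Assume there exists $j^*\in\mathbb{N}$ such that $\lambda_{2j}=0$ for all $1\le j\le j^*$. Then $\mathrm{Im}\,a_{2j}=\lambda^+_{2j}=0$ for all $1\le j\le j^*$, and $\lambda^-_j=0$ for all $1\le j\le 2j^*+3$ (with $j\le 2m-1$).
   Context: Empty sums are zero. Constants: $\gamma_j=b_{2j}-\sum_{k=1}^{j-1}\bar a_{2(j-k)}\gamma_k$ ($1\le j\le m-1$); $\lambda_{2j}=2\,\mathrm{Im}\,a_{2j}-2\sum_{k=1}^{j-1}\mathrm{Im}(\bar b_{2(j-k)}\gamma_k)$ ($1\le j\le m-1$); $\alpha_j=b_j-\frac12\sum_{k=1}^{j-1}(1+(-1)^{j-k})\bar a_{j-k}\alpha_k$, $\lambda_j^+=2\,\mathrm{Im}\,a_j+\sum_{k=1}^{j-1}(-1)^{j-k+1}\mathrm{Im}(\bar b_{j-k}\alpha_k)$, $\lambda_j^-=-\sum_{k=1}^{j-1}\mathrm{Im}(\bar b_{j-k}\alpha_k)$ ($1\le j\le 2m-1$). *)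

(* Defs.v *)
From HB Require Import structures.
From mathcomp Require Import all_boot all_order all_algebra.
Set Implicit Arguments. Unset Strict Implicit. Unset Printing Implicit Defensive.
Import Order.TTheory GRing.Theory Num.Theory.
Local Open Scope ring_scope.

(* Coefficients a_j, b_j (1 <= j <= 2m) are given as functions nat -> C;
   only indices 1..2m are ever used.  C is any numeric closed field
   (e.g. the complex numbers); 'Im and ^* are its imaginary part and
   conjugation. *)
Section Consts.
Variable C : numClosedFieldType.
Variables a b : nat -> C.

Fixpoint gammas (n : nat) : seq C :=
  match n with
  | 0 => [::]
  | n'.+1 =>
    let g := gammas n' in
    rcons g (b (2 * n'.+1)%N - \sum_(1 <= k < n'.+1) (a (2 * (n'.+1 - k))%N)^* * nth 0 g k.-1)
  end.
Definition gamma (j : nat) : C := nth 0 (gammas j) j.-1.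

Definition lambda2 (j : nat) : C :=
  2%:R * 'Im (a (2 * j)%N)
  - 2%:R * \sum_(1 <= k < j) 'Im ((b (2 * (j - k))%N)^* * gamma k).

Fixpoint alphas (n : nat) : seq C :=
  match n with
  | 0 => [::]
  | n'.+1 =>
    let al := alphas n' in
    rcons al (b n'.+1 - 2%:R^-1 * \sum_(1 <= k < n'.+1)
                  (1 + (-1) ^+ (n'.+1 - k)) * (a (n'.+1 - k))^* * nth 0 al k.-1)
  end.
Definition alpha (j : nat) : C := nth 0 (alphas j) j.-1.

Definition lambda_plus (j : nat) : C :=
  2%:R * 'Im (a j) + \sum_(1 <= k < j) (-1) ^+ (j - k + 1) * 'Im ((b (j - k))^* * alpha k).

Definition lambda_minus (j : nat) : C :=
  - \sum_(1 <= k < j) 'Im ((b (j - k))^* * alpha k).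
End Consts.

(* Main.v *)
Require Import Defs.
From HB Require Import structures.
From mathcomp Require Import all_boot all_order all_algebra.
From mathcomp Require Import zify ring lra.
Import Order.TTheory GRing.Theory Num.Theory.
Local Open Scope ring_scope.

Lemma tri_exchange (R : nmodType) n (H : nat -> nat -> R) :
  \sum_(1 <= k < n) \sum_(1 <= d < k) H k d =
  \sum_(1 <= d < n) \sum_(d.+1 <= k < n) H k d.
Proof.
elim: n => [|n IH]; first by rewrite !big_geq.
case: n IH => [|n] IH; first by rewrite !big_geq.
rewrite big_nat_recr //= IH [in RHS]big_nat_recr //= [X in _ = _ + X]big_geq // addr0.
rewrite [in RHS](eq_big_nat _ _ (F2 := fun d => \sum_(d.+1 <= k < n.+1) H k d + H n.+1 d)).
  by rewrite big_split.
by move=> d /andP[d1 dn]; rewrite big_nat_recr.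
Qed.

Lemma conv_rec (C : comNzRingType) (f g q u : nat -> C) :
 (forall n, (1 <= n)%N -> g n = f n - \sum_(1 <= k < n) q (n - k)%N * g k) ->
 forall n, \sum_(1 <= k < n) u (n - k)%N * g k =
   \sum_(1 <= k < n) u (n - k)%N * f k
   - \sum_(1 <= d < n) q d * \sum_(1 <= l < n - d) u (n - d - l)%N * g l.
Proof.
move=> hg n.
rewrite [LHS](eq_big_nat _ _ (F2 := fun k => u (n-k)%N * f k - u (n-k)%N * \sum_(1<=l<k) q (k-l)%N * g l)); last first.
  by move=> k /andP[k1 _]; rewrite hg // mulrBr.
rewrite sumrB; congr (_ - _).
transitivity (\sum_(1<=k<n) \sum_(1<=d<k) q d * (u (n-k)%N * g (k-d)%N)).
  apply: eq_big_nat => k _; rewrite mulr_sumr big_nat_rev /=.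
  apply: eq_big_nat => l /andP[l1 lk].
  have -> : (1 + k - l.+1 = k - l)%N by lia.
  have -> : (k - (k - l) = l)%N by lia.
  by rewrite mulrCA.
rewrite tri_exchange; apply: eq_big_nat => d /andP[d1 dn]; rewrite mulr_sumr.
rewrite -(add1n d) big_addn.
apply: eq_big_nat => l /andP[l1 ln].
have -> : (n - (l + d) = n - d - l)%N by lia.
by rewrite addnK.
Qed.

Section S.
Variable C : numClosedFieldType.
Variables a b : nat -> C.

Lemma size_alphas n : size (alphas a b n) = n.
Proof. by elim: n => //= n IH; rewrite size_rcons IH. Qed.

Lemma nth_alphas n n' i : (i < n)%N -> (n <= n')%N ->
  nth 0 (alphas a b n') i = nth 0 (alphas a b n) i.
Proof.
move=> lin; elim: n' => [|n' IH]; first by case: n lin.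
rewrite leq_eqVlt => /orP[/eqP -> //|]; rewrite ltnS => nn'.
by rewrite /= nth_rcons size_alphas (leq_trans lin nn') IH.
Qed.

Lemma size_gammas n : size (gammas a b n) = n.
Proof. by elim: n => //= n IH; rewrite size_rcons IH. Qed.

Lemma nth_gammas n n' i : (i < n)%N -> (n <= n')%N ->
  nth 0 (gammas a b n') i = nth 0 (gammas a b n) i.
Proof.
move=> lin; elim: n' => [|n' IH]; first by case: n lin.
rewrite leq_eqVlt => /orP[/eqP -> //|]; rewrite ltnS => nn'.
by rewrite /= nth_rcons size_gammas (leq_trans lin nn') IH.
Qed.

Definition qa (d : nat) : C := 2%:R^-1 * ((1 + (-1) ^+ d) * (a d)^*).

Lemma alpha_rec n : (1 <= n)%N ->
  alpha a b n = b n - \sum_(1 <= k < n) qa (n - k)%N * alpha a b k.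
Proof.
case: n => // n _; rewrite /alpha /= nth_rcons size_alphas ltnn eqxx.
congr (_ - _); rewrite mulr_sumr; apply: eq_big_nat => k /andP[k1 kn].
rewrite (@nth_alphas k n) //; last by case: k k1 kn.
by rewrite /qa !mulrA.
Qed.

Lemma gamma_rec n : (1 <= n)%N ->
  gamma a b n = b (2 * n)%N - \sum_(1 <= k < n) (a (2 * (n - k))%N)^* * gamma a b k.
Proof.
case: n => // n _; rewrite /gamma /= nth_rcons size_gammas ltnn eqxx.
congr (_ - _); apply: eq_big_nat => k /andP[k1 kn].
by rewrite (@nth_gammas k n) //; case: k k1 kn.
Qed.

End S.

Lemma herm_real (C : numClosedFieldType) (s b : nat -> C) n :
  (forall k, (1 <= k < n)%N -> s (n - k)%N = s k) -> (forall k, s k \is Num.real) ->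
  \sum_(1 <= k < n) s (n - k)%N * (b (n - k)%N)^* * b k \is Num.real.
Proof.
move=> hs hr; apply/CrealP; rewrite rmorph_sum big_nat_rev /=.
apply: eq_big_nat => k /andP[k1 kn].
have -> : (1 + n - k.+1 = n - k)%N by lia.
have -> : (n - (n - k) = k)%N by lia.
rewrite !rmorphM /= conjCK (CrealP (hr _)) hs ?k1 //.
rewrite -(hs k) ?k1 //. 
by rewrite mulrAC [_ * b k]mulrC.
Qed.

Lemma odd_half d : odd d = false -> d = (2 * d./2)%N.
Proof. by move=> h; move: (odd_double_half d); rewrite h /= -mul2n. Qed.

Theorem lemma2p3 (C : numClosedFieldType) (m : nat) (a b : nat -> C) (jstar : nat) :
  (1 <= m)%N ->
  (forall j : nat, (1 <= j <= jstar)%N -> (j <= m - 1)%N -> lambda2 a b j = 0) ->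
  (forall j : nat, (1 <= j <= jstar)%N -> (j <= m - 1)%N ->
     'Im (a (2 * j)%N) = 0 /\ lambda_plus a b (2 * j)%N = 0) /\
  (forall j : nat, (1 <= j <= 2 * jstar + 3)%N -> (j <= 2 * m - 1)%N ->
     lambda_minus a b j = 0).
Proof.
move=> m1 hl.
pose G n := \sum_(1 <= k < n) (b (2 * (n - k))%N)^* * gamma a b k.
have Grec : forall n, G n = \sum_(1 <= k < n) (b (2 * (n - k))%N)^* * b (2 * k)%N
      - \sum_(1 <= d < n) (a (2 * d)%N)^* * G (n - d)%N.
  move=> n; rewrite /G; apply: (@conv_rec C (fun n => b (2 * n)%N) (gamma a b)
     (fun d => (a (2 * d)%N)^*) (fun i => (b (2 * i)%N)^*)).
  by move=> k k1; rewrite gamma_rec.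
have Greal : forall j, (forall d, (1 <= d < j)%N -> (a (2 * d)%N)^* \is Num.real) ->
    forall n, (n <= j)%N -> G n \is Num.real.
  move=> j hq; elim/ltn_ind => n IH nj; rewrite Grec rpredB //.
    have := @herm_real C (fun _ => 1) (fun i => b (2 * i)%N) n.
    rewrite (eq_big_nat _ _ (F2 := fun k => (b (2 * (n - k))%N)^* * b (2 * k)%N)).
      by apply => // k; apply: rpred1.
    by move=> k _; rewrite mul1r.
  rewrite big_nat; apply: rpred_sum => d /= /andP[d1 dn].
  apply: rpredM; first by apply: hq; lia.
  by apply: IH; lia.
have HA : forall j, (1 <= j <= jstar)%N -> (j <= m - 1)%N -> 'Im (a (2 * j)%N) = 0.
  elim/ltn_ind => j IH hj hjm.
  have hq : forall d, (1 <= d < j)%N -> (a (2 * d)%N)^* \is Num.real.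
    move=> d hd; rewrite CrealJ; apply/Creal_ImP; apply: IH; lia.
  have := hl j hj hjm; rewrite /lambda2.
  have -> : \sum_(1 <= k < j) 'Im ((b (2 * (j - k))%N)^* * gamma a b k) = 'Im (G j).
    by rewrite /G raddf_sum.
  rewrite (Creal_ImP _ (Greal j hq j (leqnn j))) mulr0 subr0 => /eqP.
  by rewrite mulf_eq0 pnatr_eq0 /= => /eqP.
have qa_odd : forall d, odd d -> qa C a d = 0.
  by move=> d od; rewrite /qa -signr_odd od expr1 subrr mul0r mulr0.
have qa_even : forall d, odd d = false -> (1 <= d./2 <= jstar)%N -> (d./2 <= m - 1)%N ->
    qa C a d \is Num.real.
  move=> d ev h1 h2; rewrite /qa; apply: rpredM; first by rewrite rpredV realn.
  apply: rpredM; first by rewrite rpredD ?rpred1 // rpredX // rpredN rpred1.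
  rewrite CrealJ; apply/Creal_ImP; rewrite (odd_half _ ev); exact: HA.
split.
  move=> j hj hjm; split; first exact: HA.
  pose T n := \sum_(1 <= k < n) ((-1) ^+ (n - k) * (b (n - k)%N)^*) * alpha a b k.
  have Trec : forall n, T n = \sum_(1 <= k < n) ((-1) ^+ (n - k) * (b (n - k)%N)^*) * b k
      - \sum_(1 <= d < n) qa C a d * T (n - d)%N.
    move=> n; rewrite /T; apply: (@conv_rec C b (alpha a b) (qa C a) (fun i => (-1) ^+ i * (b i)^*)).
    by move=> k k1; rewrite alpha_rec.
  have Treal : forall n, odd n = false -> (n <= 2 * jstar)%N -> (n <= 2 * m - 2)%N ->
      T n \is Num.real.
    elim/ltn_ind => n IH ev h1 h2; rewrite Trec rpredB //.
      apply: herm_real => [k hk|k]; last by rewrite rpredX // rpredN rpred1.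
      rewrite -signr_odd -[in RHS]signr_odd oddB; last by lia.
      by rewrite ev.
    rewrite big_nat; apply: rpred_sum => d /= /andP[d1 dn].
    case od: (odd d); first by rewrite qa_odd ?mul0r ?rpred0.
    have e1 := odd_half _ ev; have e2 := odd_half _ od.
    apply: rpredM; first by apply: qa_even => //; lia.
    by apply: IH; lia.
  have TR := Creal_ImP _ (Treal (2 * j)%N ltac:(by rewrite oddM) ltac:(lia) ltac:(lia)).
  rewrite /lambda_plus HA // mulr0 add0r; apply: (@eq_trans _ _ (- 'Im (T (2 * j)%N))); last by rewrite TR oppr0.
  rewrite /T raddf_sum -sumrN.
  apply: eq_big_nat => k _.
  have hs : ((-1) ^+ (2 * j - k) : C) \is Num.real by rewrite rpredX // rpredN rpred1.
  by rewrite addn1 exprS mulN1r mulNr -[in RHS]mulrA -(@ImMl C _ hs).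
pose S n := \sum_(1 <= k < n) (b (n - k)%N)^* * alpha a b k.
have Srec : forall n, S n = \sum_(1 <= k < n) (b (n - k)%N)^* * b k
      - \sum_(1 <= d < n) qa C a d * S (n - d)%N.
  move=> n; rewrite /S; apply: (@conv_rec C b (alpha a b) (qa C a) (fun i => (b i)^*)).
  by move=> k k1; rewrite alpha_rec.
have Sreal : forall n, (n <= 2 * jstar + 3)%N -> (n <= 2 * m - 1)%N -> S n \is Num.real.
  elim/ltn_ind => n IH h1 h2; rewrite Srec rpredB //.
    have := @herm_real C (fun _ => 1) b n.
    rewrite (eq_big_nat _ _ (F2 := fun k => (b (n - k)%N)^* * b k)).
      by apply => // k; apply: rpred1.
    by move=> k _; rewrite mul1r.
  rewrite big_nat; apply: rpred_sum => d /= /andP[d1 dn].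
  case: (leqP (n - d) 1) => nd; first by rewrite /S big_geq ?mulr0 ?rpred0 //; lia.
  case od: (odd d); first by rewrite qa_odd ?mul0r ?rpred0.
  have e2 := odd_half _ od.
  apply: rpredM; first by apply: qa_even => //; lia.
  by apply: IH; lia.
move=> j hj hjm; rewrite /lambda_minus -raddf_sum.
have hS := Creal_ImP _ (Sreal j ltac:(lia) ltac:(lia)).
apply/eqP; rewrite oppr_eq0; apply/eqP; exact: hS.
Qed.
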